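(* Fix a reflection matrix $\mathbf\Phi$ and let $(\{\mathbf W_k^{\star\star}\}_{k\in\mathcal K},\mathbf R_0^{\star\star})$ be an optimal solution of problem (SDR2.1). Define, for each $k\in\mathcal K$, $$\mathbf w_k^{\mathrm{opt,II}}=(\mathbf h_k^H\mathbf W_k^{\star\star}\mathbf h_k)^{-1/2}\,\mathbf W_k^{\star\star}\mathbf h_k,\qquad \mathbf R_0^{\mathrm{opt,II}}=\mathbf R_0^{\star\star}+\sum_{k\in\mathcal K}\mathbf W_k^{\star\star}-\sum_{k\in\mathcal K}\mathbf w_k^{\mathrm{opt,II}}(\mathbf w_k^{\mathrm{opt,II}})^H .$$ Then these are well defined, $\mathbf R_0^{\mathrm{opt,II}}\succeq\mathbf 0$, and $(\{\mathbf w_k^{\mathrm{opt,II}}\},\mathbf R_0^{\mathrm{opt,II}})$ is an optimal solution of problem (P2.1). In particular (P2.1) and (SDR2.1) have the same optimal value.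
   Context: Let $M,N,K\ge1$ be integers and $\mathcal K=\{1,\dots,K\}$. Fixed data: $\mathbf G\in\mathbb C^{N\times M}$, $\mathbf h_{\mathrm d,k}\in\mathbb C^{M}$ and $\mathbf h_{\mathrm r,k}\in\mathbb C^{N}$ for $k\in\mathcal K$, thresholds $\Gamma_k>0$, noise powers $\sigma_k^2>0$, and a power budget $P_0>0$. A reflection matrix is $\mathbf\Phi=\mathrm{diag}(\mathbf v)$ with $\mathbf v\in\mathbb C^N$, $|v_n|=1$ for all $n$. For a given $\mathbf\Phi$ put $\mathbf h_k=\mathbf h_{\mathrm d,k}+\mathbf G^H\mathbf\Phi^H\mathbf h_{\mathrm r,k}$ and $\mathbf H_k=\mathbf h_k\mathbf h_k^H$. For $\mathbf w_1,\dots,\mathbf w_K\in\mathbb C^M$ the Type-II SINR of user $k$ is $$\gamma_k^{\mathrm{II}}=\frac{|\mathbf h_k^H\mathbf w_k|^2}{\sum_{i\ne k}|\mathbf h_k^H\mathbf w_i|^2+\sigma_k^2},$$ and the power constraint is $\sum_{k}\|\mathbf w_k\|^2+\mathrm{tr}(\mathbf R_0)\le P_0$. For Hermitian $\mathbf X\succeq\mathbf 0$ define $f(\mathbf X)=\mathrm{tr}\big((\mathbf G\mathbf X\mathbf G^H)^{-1}\big)$ if $\mathbf G\mathbf X\mathbf G^H$ is invertible and $f(\mathbf X)=+\infty$ otherwise. Problem (P2.1) (for fixed $\mathbf\Phi$): minimize $f\big(\sum_k\mathbf w_k\mathbf w_k^H+\mathbf R_0\big)$ over $\mathbf w_k\in\mathbb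 C^M$ and Hermitian $\mathbf R_0\succeq\mathbf 0$, subject to $\gamma_k^{\mathrm{II}}\ge\Gamma_k$ for all $k$ and the power constraint. Problem (SDR2.1) (for fixed $\mathbf\Phi$): minimize $f\big(\sum_k\mathbf W_k+\mathbf R_0\big)$ over Hermitian $\mathbf W_k\succeq\mathbf 0$ ($k\in\mathcal K$) and $\mathbf R_0\succeq\mathbf 0$, subject to $\tfrac1{\Gamma_k}\mathrm{tr}(\mathbf H_k\mathbf W_k)-\sum_{i\ne k}\mathrm{tr}(\mathbf H_k\mathbf W_i)\ge\sigma_k^2$ for all $k$, and $\sum_k\mathrm{tr}(\mathbf W_k)+\mathrm{tr}(\mathbf R_0)\le P_0$. *)

(* Defs.v *)
(* The complex field is abstracted as an arbitrary
   numClosedFieldType C (e.g. the complex numbers R[i]); order on C compares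
   real numbers ("0 <= z" means z is real and nonnegative). *)
From HB Require Import structures.
From mathcomp Require Import all_boot all_order all_algebra.
Set Implicit Arguments. Unset Strict Implicit. Unset Printing Implicit Defensive.
Import Order.TTheory GRing.Theory Num.Theory.
Local Open Scope ring_scope.

Section Defs.
Variable C : numClosedFieldType.

Definition ctmx (m n : nat) (A : 'M[C]_(m, n)) : 'M[C]_(n, m) :=
  (map_mx Num.conj A)^T.

Definition hermitian (n : nat) (A : 'M[C]_n) : Prop := ctmx A = A.

Definition psd (n : nat) (A : 'M[C]_n) : Prop :=
  hermitian A /\ forall x : 'cV[C]_n, 0 <= (ctmx x *m A *m x) 0 0.

Definition qf (n : nat) (x : 'cV[C]_n) (A : 'M[C]_n) (y : 'cV[C]_n) : C :=
  (ctmx x *m A *m y) 0 0.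

Definition sqnorm (n : nat) (w : 'cV[C]_n) : C := (ctmx w *m w) 0 0.

(* effective channel h_k = h_{d,k} + G^H Phi^H h_{r,k}, Phi = diag(v) *)
Definition chan (M N : nat) (G : 'M[C]_(N, M)) (hd : 'cV[C]_M) (hr : 'cV[C]_N)
  (v : 'cV[C]_N) : 'cV[C]_M :=
  hd + ctmx G *m ctmx (diag_mx v^T) *m hr.

(* objective f(X) = tr((G X G^H)^{-1}) if invertible, +infinity (None) otherwise *)
Definition fobj (M N : nat) (G : 'M[C]_(N, M)) (X : 'M[C]_M) : option C :=
  let Y := G *m X *m ctmx G in
  if Y \in unitmx then Some (\tr (invmx Y)) else None.

Definition obj_le (a b : option C) : Prop :=
  match a, b with
  | _, None => True
  | None, Some _ => False
  | Some x, Some y => x <= y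
  end.

Definition sinr2 (M K : nat) (h : 'cV[C]_M) (w : 'I_K -> 'cV[C]_M) (s2 : C)
  (k : 'I_K) : C :=
  `|(ctmx h *m w k) 0 0| ^+ 2 /
  (\sum_(i < K | i != k) `|(ctmx h *m w i) 0 0| ^+ 2 + s2).

Definition feasP21 (M K : nat) (h : 'I_K -> 'cV[C]_M) (Gam s2 : 'I_K -> C)
  (P0 : C) (w : 'I_K -> 'cV[C]_M) (R0 : 'M[C]_M) : Prop :=
  psd R0 /\
  (forall k, Gam k <= sinr2 (h k) w (s2 k) k) /\
  \sum_(k < K) sqnorm (w k) + \tr R0 <= P0.

Definition objP21 (M N K : nat) (G : 'M[C]_(N, M)) (w : 'I_K -> 'cV[C]_M)
  (R0 : 'M[C]_M) : option C :=
  fobj G (\sum_(k < K) (w k *m ctmx (w k)) + R0).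

Definition optP21 (M N K : nat) (G : 'M[C]_(N, M)) (h : 'I_K -> 'cV[C]_M)
  (Gam s2 : 'I_K -> C) (P0 : C) (w : 'I_K -> 'cV[C]_M) (R0 : 'M[C]_M) : Prop :=
  feasP21 h Gam s2 P0 w R0 /\
  forall w' R0', feasP21 h Gam s2 P0 w' R0' ->
    obj_le (objP21 G w R0) (objP21 G w' R0').

(* feasibility for (SDR2.1), with H_k = h_k h_k^H *)
Definition feasSDR (M K : nat) (h : 'I_K -> 'cV[C]_M) (Gam s2 : 'I_K -> C)
  (P0 : C) (W : 'I_K -> 'M[C]_M) (R0 : 'M[C]_M) : Prop :=
  (forall k, psd (W k)) /\ psd R0 /\
  (forall k, s2 k <= (Gam k)^-1 * \tr (h k *m ctmx (h k) *m W k)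
                    - \sum_(i < K | i != k) \tr (h k *m ctmx (h k) *m W i)) /\
  \sum_(k < K) \tr (W k) + \tr R0 <= P0.

Definition objSDR (M N K : nat) (G : 'M[C]_(N, M)) (W : 'I_K -> 'M[C]_M)
  (R0 : 'M[C]_M) : option C :=
  fobj G (\sum_(k < K) W k + R0).

Definition optSDR (M N K : nat) (G : 'M[C]_(N, M)) (h : 'I_K -> 'cV[C]_M)
  (Gam s2 : 'I_K -> C) (P0 : C) (W : 'I_K -> 'M[C]_M) (R0 : 'M[C]_M) : Prop :=
  feasSDR h Gam s2 P0 W R0 /\
  forall W' R0', feasSDR h Gam s2 P0 W' R0' ->
    obj_le (objSDR G W R0) (objSDR G W' R0').

End Defs.

(* Main.v *)
Require Import Defs.
From HB Require Import structures.
From mathcomp Require Import all_boot all_order all_algebra ring.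
Import Order.TTheory GRing.Theory Num.Theory Num.Def.
Local Open Scope ring_scope.
Set Implicit Arguments. Unset Strict Implicit.

Section H.
Variable C : numClosedFieldType.

Lemma ctmxE m n (A : 'M[C]_(m, n)) i j : ctmx A i j = (A j i)^*.
Proof. by rewrite /ctmx !mxE. Qed.

Lemma ctmxK m n (A : 'M[C]_(m, n)) : ctmx (ctmx A) = A.
Proof. by apply/matrixP=> i j; rewrite !ctmxE conjCK. Qed.

Lemma ctmxM m n p (A : 'M[C]_(m, n)) (B : 'M[C]_(n, p)) :
  ctmx (A *m B) = ctmx B *m ctmx A.
Proof. by rewrite /ctmx map_mxM trmx_mul. Qed.

Lemma ctmxD m n (A B : 'M[C]_(m, n)) : ctmx (A + B) = ctmx A + ctmx B.
Proof. by apply/matrixP=> i j; rewrite !(ctmxE, mxE) rmorphD. Qed.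

Lemma ctmxN m n (A : 'M[C]_(m, n)) : ctmx (- A) = - ctmx A.
Proof. by apply/matrixP=> i j; rewrite !(ctmxE, mxE) rmorphN. Qed.

Lemma ctmxB m n (A B : 'M[C]_(m, n)) : ctmx (A - B) = ctmx A - ctmx B.
Proof. by rewrite ctmxD ctmxN. Qed.

Lemma ctmxZ m n a (A : 'M[C]_(m, n)) : ctmx (a *: A) = a^* *: ctmx A.
Proof. by apply/matrixP=> i j; rewrite !(ctmxE, mxE) rmorphM. Qed.

Lemma ctmx_sum m n I (r : seq I) (P : pred I) (F : I -> 'M[C]_(m, n)) :
  ctmx (\sum_(i <- r | P i) F i) = \sum_(i <- r | P i) ctmx (F i).
Proof.
elim/big_rec2: _ => [|i x y _ <-]; last by rewrite ctmxD.
by apply/matrixP=> i j; rewrite !(ctmxE, mxE) rmorph0.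
Qed.

Lemma mul11 m p (A : 'M[C]_(m, 1)) (B : 'M[C]_(1, p)) i j :
  (A *m B) i j = A i 0 * B 0 j.
Proof. by rewrite mxE big_ord1. Qed.

Lemma qf_conj n (x y : 'cV[C]_n) (W : 'M[C]_n) : Defs.hermitian W -> qf y W x = Num.conj (qf x W y).
Proof.
move=> hW; have e : ctmx (ctmx x *m W *m y) = ctmx y *m W *m x.
  by rewrite !ctmxM ctmxK hW mulmxA.
by rewrite /qf -e ctmxE.
Qed.

Lemma qfBl n (x y z : 'cV[C]_n) (W : 'M[C]_n) c :
  qf (x - c *: y) W z = qf x W z - c^* * qf y W z.
Proof. by rewrite /qf ctmxB ctmxZ !mulmxBl -!scalemxAl !mxE. Qed.

Lemma qfBr n (x y z : 'cV[C]_n) (W : 'M[C]_n) c :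
  qf z W (x - c *: y) = qf z W x - c * qf z W y.
Proof. by rewrite /qf mulmxBr -!scalemxAr !mxE. Qed.

Lemma tr_qf n (h : 'cV[C]_n) (W : 'M[C]_n) : \tr (h *m ctmx h *m W) = qf h W h.
Proof.
by rewrite -mulmxA mxtrace_mulC /qf /mxtrace big_ord1.
Qed.

Lemma sqnorm_tr n (w : 'cV[C]_n) : sqnorm w = \tr (w *m ctmx w).
Proof. by rewrite mxtrace_mulC /sqnorm /mxtrace big_ord1. Qed.

Lemma psd0 n : psd (0 : 'M[C]_n).
Proof.
split; first by apply/matrixP=> i j; rewrite ctmxE !mxE ?rmorph0.
by move=> x; rewrite mulmx0 mul0mx mxE.
Qed.

Lemma psdD n (A B : 'M[C]_n) : psd A -> psd B -> psd (A + B).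
Proof.
move=> [hA pA] [hB pB]; split; first by rewrite /Defs.hermitian ctmxD hA hB.
by move=> x; rewrite mulmxDr mulmxDl mxE addr_ge0.
Qed.

Lemma psd_sum n K (F : 'I_K -> 'M[C]_n) : (forall k, psd (F k)) ->
  psd (\sum_(k < K) F k).
Proof. by move=> hF; apply: (big_ind (@psd C n)) => //; [exact: psd0 | exact: psdD]. Qed.

Lemma qf_rank1 n (w x : 'cV[C]_n) : qf x (w *m ctmx w) x = `|(ctmx x *m w) 0 0| ^+ 2.
Proof.
have e : ctmx w *m x = ctmx (ctmx x *m w) by rewrite ctmxM ctmxK.
by rewrite /qf !mulmxA -mulmxA mul11 e ctmxE normCK.
Qed.

Lemma psd_rank1 n (w : 'cV[C]_n) : psd (w *m ctmx w).
Proof.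
split; first by rewrite /Defs.hermitian ctmxM ctmxK.
by move=> x; rewrite -/(qf x _ x) qf_rank1 exprn_ge0.
Qed.

Lemma CS n (W : 'M[C]_n) x y : psd W -> 0 < qf y W y ->
  `|qf x W y| ^+ 2 / qf y W y <= qf x W x.
Proof.
move=> [hW pW] ha; set a := qf y W y; set b := qf x W y.
have a0 : a != 0 by rewrite gt_eqF.
have aR : a^* = a by rewrite geC0_conj // ltW.
pose c := b^* / a.
have := pW (x - c *: y); rewrite -/(qf _ _ _) qfBl !qfBr.
rewrite -/a -/b (qf_conj x y hW) -/b.
have -> : c^* = b / a by rewrite /c rmorphM /= conjCK fmorphV /= aR.
rewrite normCK /c.
suff -> : qf x W x - b^* / a * b - b / a * (b^* - b^* / a * a) = qf x W x - b * b^* / a.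
  by rewrite subr_ge0.
by field.
Qed.

Lemma qf_BZ n (x : 'cV[C]_n) (A B : 'M[C]_n) c :
  qf x (A - c *: B) x = qf x A x - c * qf x B x.
Proof. by rewrite /qf mulmxBr mulmxBl -scalemxAr -scalemxAl !mxE. Qed.

Lemma qf_outer n (x z h : 'cV[C]_n) (W : 'M[C]_n) :
  qf x (W *m h *m ctmx h *m W) z = qf x W h * qf h W z.
Proof.
have e : ctmx x *m (W *m h *m ctmx h *m W) *m z =
  (ctmx x *m W *m h) *m (ctmx h *m W *m z) by rewrite !mulmxA.
by rewrite /qf e mul11.
Qed.

Lemma norm_sqrtV (a q : C) : 0 <= a -> `|(sqrtC a)^-1 * q| ^+ 2 = `|q| ^+ 2 / a.
Proof.
move=> a0; rewrite normrM exprMn normfV exprVn (ger0_norm (x := sqrtC a)) ?sqrtC_ge0 //.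
by rewrite sqrtCK mulrC.
Qed.

Lemma conj_sqrtV (a : C) : 0 <= a -> ((sqrtC a)^-1)^* = (sqrtC a)^-1.
Proof. by move=> a0; rewrite geC0_conj // invr_ge0 sqrtC_ge0. Qed.

Lemma sqrtVV (a : C) : 0 <= a -> (sqrtC a)^-1 * (sqrtC a)^-1 = a^-1.
Proof. by move=> a0; rewrite -invfM -expr2 sqrtCK. Qed.
End H.

Unset Implicit Arguments. Set Strict Implicit.

Theorem proposition3 (C : numClosedFieldType) (M N K : nat)
  (hM : (0 < M)%N) (hN : (0 < N)%N) (hK : (0 < K)%N)
  (G : 'M[C]_(N, M)) (hd : 'I_K -> 'cV[C]_M) (hr : 'I_K -> 'cV[C]_N)
  (Gam s2 : 'I_K -> C) (P0 : C)
  (hGam : forall k, 0 < Gam k) (hs2 : forall k, 0 < s2 k) (hP0 : 0 < P0)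
  (v : 'cV[C]_N) (hv : forall n, `|v n 0| = 1)
  (W : 'I_K -> 'M[C]_M) (R0 : 'M[C]_M) :
  let h := fun k => chan G (hd k) (hr k) v in
  optSDR G h Gam s2 P0 W R0 ->
  let wopt := fun k => (sqrtC (qf (h k) (W k) (h k)))^-1 *: (W k *m h k) in
  let R0opt := R0 + \sum_(k < K) W k - \sum_(k < K) (wopt k *m ctmx (wopt k)) in
  (forall k, 0 < qf (h k) (W k) (h k)) /\
  psd R0opt /\
  optP21 G h Gam s2 P0 wopt R0opt /\
  objP21 G wopt R0opt = objSDR G W R0.
Proof.
move=> h [[pW [pR0 [sinrW powW]]] optW] wopt R0opt.
set a := fun k => qf (h k) (W k) (h k).
have hWh : forall k, ctmx (W k) = W k by move=> k; case: (pW k) => H _; exact: H.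
have qge0 : forall k i, 0 <= qf (h k) (W i) (h k) by move=> k i; case: (pW i) => _ H; exact: H.
have hk : forall k, Gam k * (s2 k + \sum_(i < K | i != k) qf (h k) (W i) (h k)) <= a k.
  move=> k; have := sinrW k; rewrite tr_qf.
  under eq_bigr do rewrite tr_qf.
  rewrite lerBrDr => H.
  rewrite -(ler_pM2l (hGam k)) in H.
  by rewrite (le_trans H) // mulrA mulfV ?gt_eqF // mul1r.
have ha : forall k, 0 < a k.
  move=> k; apply: lt_le_trans (hk k).
  by rewrite mulr_gt0 // ltr_wpDr ?sumr_ge0.
have hww : forall k, wopt k *m ctmx (wopt k) =
    (a k)^-1 *: (W k *m h k *m ctmx (h k) *m W k).
  move=> k; rewrite /wopt ctmxZ -scalemxAl -scalemxAr scalerA ctmxM hWh.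
  rewrite (conj_sqrtV (ltW (ha k))) (sqrtVV (ltW (ha k))). by rewrite !mulmxA.
have hqw : forall k i, (ctmx (h k) *m wopt i) 0 0 =
    (sqrtC (a i))^-1 * qf (h k) (W i) (h i).
  by move=> k i; rewrite /wopt -scalemxAr mxE mulmxA.
have pR : psd R0opt.
  rewrite /R0opt -addrA -sumrB; apply: psdD => //; apply: psd_sum => k.
  rewrite hww; split.
    rewrite /Defs.hermitian ctmxB ctmxZ !ctmxM ctmxK hWh fmorphV /=.
    by rewrite geC0_conj ?ltW // !mulmxA.
  move=> x; rewrite -/(qf x _ x) qf_BZ qf_outer (qf_conj x (h k) (hWh k)) -normCK.
  by rewrite subr_ge0 mulrC; exact: (CS x (pW k) (ha k)).
have hobj : objP21 G wopt R0opt = objSDR G W R0.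
  by rewrite /objP21 /objSDR /R0opt addrC subrK addrC.
split => //; split => //; split => //; split.
  split => //; split.
    move=> k; rewrite /sinr2 ler_pdivlMr; last first.
      apply: ltr_wpDl => //; apply: sumr_ge0 => i _; exact: exprn_ge0.
    rewrite hqw (norm_sqrtV _ (ltW (ha k))) (ger0_norm (ltW (ha k))) expr2 mulfK ?gt_eqF //.
    apply: le_trans (hk k); rewrite ler_pM2l // addrC lerD2l.
    by apply: ler_sum => i _; rewrite hqw (norm_sqrtV _ (ltW (ha i))); exact: (CS (h k) (pW i) (ha i)).
  rewrite (eq_bigr _ (fun k _ => sqnorm_tr (wopt k))).
  rewrite /R0opt !mxtraceD (raddfN (@mxtrace _ M)) !(raddf_sum (@mxtrace _ M)).
  by rewrite addrC subrK addrC.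
move=> w' R0' [pR' [sinr' pow']].
have F : feasSDR h Gam s2 P0 (fun k => w' k *m ctmx (w' k)) R0'.
  split; first by move=> k; exact: psd_rank1.
  split => //; split.
    move=> k /=; rewrite tr_qf qf_rank1; under eq_bigr do rewrite tr_qf qf_rank1.
    have := sinr' k; rewrite /sinr2 ler_pdivlMr; last first.
      apply: ltr_wpDl => //; apply: sumr_ge0 => i _; exact: exprn_ge0.
    move=> H; rewrite lerBrDr addrC -(ler_pM2l (hGam k)) mulrA mulfV ?gt_eqF // mul1r.
    exact H.
  by rewrite /=; under eq_bigr do rewrite -sqnorm_tr.
by have := optW _ _ F; rewrite -hobj.
Qed.
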